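(* Let $\Gamma$ be a connected finite simplicial graph with at least three vertices. Suppose there is a collection $\mathcal{G}$ of induced subgraphs $\Delta\subset\Gamma$ satisfying both of the following: (1) for each $\Delta\in\mathcal{G}$, $A(\Delta)$ has property $\mathbf{F}(\mathcal{H})$; (2) each two-edge segment of $\Gamma$ is contained in some $\Delta\in\mathcal{G}$. Then $A(\Gamma)$ has property $\mathbf{F}(\mathcal{H})$, where $\mathcal{H}=\{F_2,\mathbb{Z}^2\}$.
   Context: $A(\Gamma)$ is the right-angled Artin group of $\Gamma$: it is generated by the vertices of $\Gamma$, with relations that adjacent vertices commute. For an induced subgraph $\Delta$, $A(\Delta)$ is the subgroup generated by the vertices of $\Delta$. A subgraph is induced if it contains every edge of $\Gamma$ between two of its vertices. A two-edge segment is a subgraph consisting of vertices $u,v,w$ with $u\ne w$, an edge $uv$ and an edge $vw$. All actions on trees are simplicial and without inversions. A group $G$ has property $\mathbf{F}(\mathcal{H})$ if, whenever $G$ acts on a tree, either there is a global fixed point or some subgroup of $G$ isomorphic to $F_2$ or to $\mathbb{Z}^2$ fixes an edge. *)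

(* Defs.v *)
From mathcomp Require Import all_boot.
From Stdlib Require Import ZArith List.

Set Implicit Arguments.
Unset Strict Implicit.
Unset Printing Implicit Defensive.

Record grp := Grp {
  gcar :> Type;
  gmul : gcar -> gcar -> gcar;
  gone : gcar;
  ginv : gcar -> gcar;
  gmulA : forall x y z, gmul x (gmul y z) = gmul (gmul x y) z;
  gmul1 : forall x, gmul gone x = x;
  gmulV : forall x, gmul (ginv x) x = gone }.

Definition is_hom (G H : grp) (phi : G -> H) : Prop :=
  forall x y, phi (gmul x y) = gmul (phi x) (phi y).

Fixpoint gpow (G : grp) (g : G) (n : nat) : G :=
  match n with O => gone G | S n' => gmul g (gpow g n') end.

Definition zpow (G : grp) (g : G) (z : Z) : G :=
  if (z <? 0)%Z then ginv (gpow g (Z.abs_nat z)) else gpow g (Z.abs_nat z).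

Inductive gen (G : grp) (S : G -> Prop) : G -> Prop :=
  | gen_in x : S x -> gen S x
  | gen_one : gen S (gone G)
  | gen_mul x y : gen S x -> gen S y -> gen S (gmul x y)
  | gen_inv x : gen S x -> gen S (ginv x).

(* words in a, b: a letter is (is_b, inverted) *)
Definition letter_val (G : grp) (a b : G) (l : bool * bool) : G :=
  let g := if l.1 then b else a in if l.2 then ginv g else g.

Fixpoint word_val (G : grp) (a b : G) (w : list (bool * bool)) : G :=
  match w with nil => gone G | l :: w' => gmul (letter_val a b l) (word_val a b w') end.

Fixpoint reduced_word (w : list (bool * bool)) : Prop :=
  match w with
  | l1 :: ((l2 :: _) as w') => ~ (l1.1 = l2.1 /\ l1.2 = negb l2.2) /\ reduced_word w'
  | _ => True
  end.

(* a, b freely generate the subgroup <a,b>, i.e. <a,b> is isomorphic to F_2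
   via the basis a, b *)
Definition free_pair (G : grp) (a b : G) : Prop :=
  forall w, w <> nil -> reduced_word w -> word_val a b w <> gone G.

(* a, b form a basis of <a,b> as a free abelian group, i.e. <a,b> ~= Z^2 *)
Definition free_abelian_pair (G : grp) (a b : G) : Prop :=
  gmul a b = gmul b a /\
  forall m n : Z, gmul (zpow a m) (zpow b n) = gone G -> m = 0%Z /\ n = 0%Z.

Fixpoint chain (T : Type) (E : T -> T -> Prop) (x : T) (l : list T) : Prop :=
  match l with nil => True | y :: l' => E x y /\ chain E y l' end.

Definition is_tree (T : Type) (E : T -> T -> Prop) : Prop :=
  inhabited T /\
  (forall x y, E x y -> E y x) /\
  (forall x, ~ E x x) /\
  (forall x y, exists l, chain E x l /\ List.last l x = y) /\
  ~ (exists x l, 2 <= List.length l /\ List.NoDup (x :: l) /\ chain E x l /\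
                 E (List.last l x) x).

(* act restricted to the subgroup S is a simplicial action without inversions *)
Definition tree_action (G : grp) (S : G -> Prop) (T : Type) (E : T -> T -> Prop)
    (act : G -> T -> T) : Prop :=
  (forall x, act (gone G) x = x) /\
  (forall g h x, S g -> S h -> act (gmul g h) x = act g (act h x)) /\
  (forall g x y, S g -> (E x y <-> E (act g x) (act g y))) /\
  (forall g x y, S g -> E x y -> ~ (act g x = y /\ act g y = x)).

Definition property_F (G : grp) (S : G -> Prop) : Prop :=
  forall (T : Type) (E : T -> T -> Prop) (act : G -> T -> T),
    is_tree E -> tree_action S E act ->
    (exists x, forall g, S g -> act g x = x) \/
    (exists a b x y, S a /\ S b /\ E x y /\
       (free_pair a b \/ free_abelian_pair a b) /\
       act a x = x /\ act a y = y /\ act b x = x /\ act b y = y).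

(* (G, iota) is the RAAG of the graph (V, adj): universal property *)
Definition is_RAAG (V : Type) (adj : V -> V -> bool) (G : grp) (iota : V -> G) : Prop :=
  (forall u v, adj u v -> gmul (iota u) (iota v) = gmul (iota v) (iota u)) /\
  forall (H : grp) (f : V -> H),
    (forall u v, adj u v -> gmul (f u) (f v) = gmul (f v) (f u)) ->
    (exists phi : G -> H, is_hom phi /\ forall v, phi (iota v) = f v) /\
    (forall phi psi : G -> H, is_hom phi -> is_hom psi ->
       (forall v, phi (iota v) = f v) -> (forall v, psi (iota v) = f v) ->
       forall g, phi g = psi g).

Definition A_sub (V : finType) (G : grp) (iota : V -> G) (D : {set V}) : G -> Prop :=
  gen (fun g => exists v, v \in D /\ g = iota v).

(* Main.v *)
Require Import Defs.
From mathcomp Require Import all_boot.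
From Stdlib Require Import Classical ZArith List Lia.

Section Tree.
Variables (T : Type) (E : T -> T -> Prop).

Lemma last_cons' (l : list T) a x : List.last (a :: l) x = List.last l a.
Proof. induction l as [|b l IH]; [reflexivity|]. simpl in *. destruct l; auto. Qed.

Lemma last_app' (l1 l2 : list T) x :
  List.last (app l1 l2) x = List.last l2 (List.last l1 x).
Proof.
  revert x; induction l1 as [|a l1 IH]; intros x; [reflexivity|].
  change (app (a :: l1) l2) with (a :: app l1 l2).
  rewrite !last_cons'. apply IH.
Qed.

Lemma chain_app (l1 l2 : list T) x :
  chain E x (app l1 l2) <-> chain E x l1 /\ chain E (List.last l1 x) l2.
Proof.
  revert x; induction l1 as [|a l1 IH]; intros x; simpl.
  - tauto.
  - rewrite IH -(last_cons' l1 a x) /=. tauto.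
Qed.

Lemma shorten_chain (l : list T) a : chain E a l ->
  exists l', chain E a l' /\ List.last l' a = List.last l a /\ NoDup (a :: l') /\ incl l' l.
Proof.
  revert a; induction l as [|b l IH]; intros a Hc.
  - exists nil; split; [exact I|split; [reflexivity|split]].
    + constructor; [intros []|constructor].
    + intros z [].
  - destruct Hc as [Hab Hc].
    destruct (IH b Hc) as [l'' [Hc'' [Hl'' [Hn'' Hi'']]]].
    destruct (classic (In a (b :: l''))) as [Hin|Hnin].
    + destruct (in_split _ _ Hin) as [p1 [p2 Hp]].
      exists p2.
      have Hc3 : chain E a (b :: l'') by split.
      rewrite Hp in Hc3. apply chain_app in Hc3. destruct Hc3 as [_ [_ Hc3]].
      split; [exact Hc3|split; [|split]].
      * have H1 := last_app' p1 (a :: p2) a. rewrite -Hp last_cons' in H1.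
        rewrite last_cons' in H1. rewrite -H1 last_cons' Hl''. by [].
      * rewrite Hp in Hn''. exact (NoDup_app_remove_l _ _ Hn'').
      * intros z Hz. have : In z (b :: l'') by rewrite Hp; apply in_or_app; right; right.
        intros [->|Hz']; [left; reflexivity|right; exact (Hi'' _ Hz')].
    + exists (b :: l''). split; [split; assumption|split; [|split]].
      * rewrite !last_cons'. exact Hl''.
      * constructor; assumption.
      * intros z [->|Hz]; [left; reflexivity|right; exact (Hi'' _ Hz)].
Qed.

Definition ra (x a z : T) := exists l, chain E a l /\ List.last l a = z /\ ~ In x l.

Hypothesis Esym : forall x y, E x y -> E y x.
Hypothesis Eirr : forall x, ~ E x x.

Lemma ra_back x a (l : list T) b : chain E b l -> ~ In x (b :: l) ->
  ra x a (List.last l b) -> ra x a b.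
Proof.
  revert b; induction l as [|c l IH]; intros b Hc Hn Hr; [exact Hr|].
  destruct Hc as [Hbc Hc].
  rewrite last_cons' in Hr.
  have Hn' : ~ In x (c :: l) by intros H; apply Hn; right.
  destruct (IH c Hc Hn' Hr) as [m [Hm1 [Hm2 Hm3]]].
  exists (app m (b :: nil)). split; [|split].
  - apply chain_app. split; [exact Hm1|]. rewrite Hm2. split; [apply Esym; exact Hbc|exact I].
  - by rewrite last_app'.
  - intros H. apply in_app_or in H. destruct H as [H|[H|[]]]; [exact (Hm3 H)|].
    apply Hn; left; exact H.
Qed.

Hypothesis Hacyc : ~ (exists (x : T) (l : list T),
   1 < length l /\ NoDup (x :: l) /\ chain E x l /\ E (List.last l x) x).

Lemma no_two_nb x a b : E x a -> E x b -> a <> b -> ra x a b -> False.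
Proof.
  intros Ha Hb Hab [l [Hc [Hl Hn]]].
  destruct (shorten_chain l a Hc) as [l' [Hc' [Hl' [Hd Hi]]]].
  apply Hacyc. exists x, (a :: l').
  destruct l' as [|c l'].
  - simpl in Hl'. rewrite -Hl' in Hl. by case: Hab.
  - split; [by []|split; [|split]].
    + constructor; [|exact Hd]. intros [H|H].
      * subst; exact (Eirr _ Ha).
      * exact (Hn (Hi _ H)).
    + split; assumption.
    + rewrite last_cons' Hl' Hl. apply Esym; exact Hb.
Qed.

Lemma shortest x y : (exists l, chain E x l /\ List.last l x = y) ->
  exists l, chain E x l /\ List.last l x = y /\
    forall l1, chain E x l1 -> List.last l1 x = y -> (length l <= length l1)%coq_nat.
Proof.
  intros [l Hl].
  have : forall n (l : list T), length l = n -> chain E x l /\ List.last l x = y ->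
    exists l, chain E x l /\ List.last l x = y /\
    forall l1, chain E x l1 -> List.last l1 x = y -> (length l <= length l1)%coq_nat.
  { intros n. induction n as [n IH] using (well_founded_induction Wf_nat.lt_wf).
    intros l0 Hlen [H1 H2].
    destruct (classic (exists l1, chain E x l1 /\ List.last l1 x = y /\
                 (length l1 < length l0)%coq_nat)) as [[l1 [A [B C]]]|Hno].
    - subst n. exact (IH _ C l1 erefl (conj A B)).
    - exists l0; split; [exact H1|split; [exact H2|]].
      intros l1 A B. destruct (Compare_dec.le_lt_dec (length l0) (length l1)) as [h|h]; [exact h|].
      exfalso; apply Hno; exists l1; auto. }
  intros Hm; exact (Hm _ l erefl Hl).
Qed.

Lemma chain_map (f : T -> T) a l : (forall u v, E u v -> E (f u) (f v)) ->
  chain E a l -> chain E (f a) (List.map f l).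
Proof.
  intros Hf; revert a; induction l as [|b l IH]; intros a Hc; [exact I|].
  destruct Hc as [H1 H2]; split; [exact (Hf _ _ H1)|exact (IH _ H2)].
Qed.

Lemma last_map' (f : T -> T) a l : List.last (List.map f l) (f a) = f (List.last l a).
Proof.
  revert a; induction l as [|b l IH]; intros a; [reflexivity|].
  change (List.map f (b :: l)) with (f b :: List.map f l).
  rewrite !last_cons'. apply IH.
Qed.

End Tree.
Arguments last_cons' {T}. Arguments last_app' {T}. Arguments chain_app {T E}.
Arguments shorten_chain {T E}. Arguments ra_back {T E} Esym {x a l b}.
Arguments no_two_nb {T E} Esym Eirr Hacyc {x a b}.
Arguments shortest {T E x y}. Arguments chain_map {T E f a l}. Arguments last_map' {T}.

Section Fix.
Variables (G : grp) (S : G -> Prop) (T : Type) (E : T -> T -> Prop) (act : G -> T -> T).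
Hypothesis Htree : is_tree E.
Hypothesis TA : tree_action S E act.
Hypothesis Sinv : forall g, S g -> S (ginv g).

Lemma act_inj g u v : S g -> act g u = act g v -> u = v.
Proof.
  intros Hg H.
  destruct TA as [T1 [T2 _]].
  have K : forall w, act (ginv g) (act g w) = w.
  { intros w. rewrite -T2 ?gmulV ?T1 //. by apply Sinv. }
  by rewrite -(K u) H K.
Qed.

Lemma fix_edge g h x y : S g -> S h -> act g x = x -> act g y = y ->
  act h x = x -> act h y = y -> x <> y ->
  exists x1, E x x1 /\ act g x1 = x1 /\ act h x1 = x1.
Proof.
  intros Sg Sh gx gy hx hy Hxy.
  destruct Htree as [_ [Esym [Eirr [Hconn Hacyc]]]].
  destruct (shortest (Hconn x y)) as [l [Hc [Hl Hmin]]].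
  destruct l as [|x1 rest]; [by case: Hxy|].
  destruct Hc as [Hx1 Hrest].
  rewrite last_cons' in Hl.
  have Hnin : ~ In x rest.
  { intros Hin. destruct (in_split _ _ Hin) as [p1 [p2 Hp]].
    have Hc2 := Hrest. rewrite Hp in Hc2. apply chain_app in Hc2.
    destruct Hc2 as [_ [_ Hc2]].
    have Hl2 : List.last p2 x = y.
    { rewrite -Hl Hp last_app' last_cons'. reflexivity. }
    have := Hmin p2 Hc2 Hl2. simpl. rewrite Hp length_app /=. lia. }
  have Hx1x : x1 <> x by intros ->; exact (Eirr _ Hx1).
  have one : forall k, S k -> act k x = x -> act k y = y -> act k x1 = x1.
  { intros k Sk kx ky. apply NNPP; intros Hne.
    destruct TA as [_ [_ [T3 _]]].
    apply (no_two_nb Esym Eirr Hacyc (x:=x) (a:=x1) (b:=act k x1)); auto.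
    - have := proj1 (T3 k x x1 Sk) Hx1. by rewrite kx.
    - apply (ra_back Esym (l := List.map (act k) rest)).
      + apply chain_map; [|exact Hrest]. intros u v; apply (T3 k u v Sk).
      + intros [H|H].
        * apply Hx1x. apply (act_inj k x1 x Sk). by rewrite H kx.
        * apply in_map_iff in H. destruct H as [z [Hz1 Hz2]].
          rewrite -kx in Hz1. apply (act_inj k _ _ Sk) in Hz1. subst. exact (Hnin Hz2).
      + rewrite last_map' Hl ky. exists rest. auto. }
  exists x1. auto.
Qed.
End Fix.

Definition z2mul (p q : Z * Z) : Z * Z := ((fst p + fst q)%Z, (snd p + snd q)%Z).
Definition z2inv (p : Z * Z) : Z * Z := ((- fst p)%Z, (- snd p)%Z).

Lemma z2mulA x y z : z2mul x (z2mul y z) = z2mul (z2mul x y) z.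
Proof. destruct x, y, z; rewrite /z2mul /=; f_equal; lia. Qed.
Lemma z2mul1 x : z2mul (0%Z, 0%Z) x = x.
Proof. destruct x; rewrite /z2mul /=; f_equal; lia. Qed.
Lemma z2mulV x : z2mul (z2inv x) x = (0%Z, 0%Z).
Proof. destruct x; rewrite /z2mul /=; f_equal; lia. Qed.

Definition Z2 : grp := Grp z2mulA z2mul1 z2mulV.

Lemma hom_z2 (G : grp) (phi : G -> Z2) : is_hom phi ->
  (phi (gone G) = (0%Z, 0%Z)) /\
  forall (g : G) (m : Z), phi (zpow g m) = ((m * fst (phi g))%Z, (m * snd (phi g))%Z).
Proof.
  intros Hp.
  have H1 : phi (gone G) = (0%Z, 0%Z).
  { have := Hp (gone G) (gone G). rewrite gmul1.
    destruct (phi (gone G)) as [a b]. simpl. rewrite /z2mul /=. intros H; injection H; intros; f_equal; lia. }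
  split; [exact H1|].
  have Hpow : forall g n, phi (gpow g n) = ((Z.of_nat n * fst (phi g))%Z, (Z.of_nat n * snd (phi g))%Z).
  { intros g n; induction n as [|n IH]; cbn [gpow]. { rewrite H1. reflexivity. }
    rewrite Hp IH. cbn [gmul Z2]. rewrite /z2mul. cbn [fst snd]. rewrite Nat2Z.inj_succ. f_equal; lia. }
  have Hinv : forall g, phi (ginv g) = z2inv (phi g).
  { intros g. have := Hp (ginv g) g. rewrite gmulV H1 /=. rewrite /z2mul /z2inv.
    destruct (phi (ginv g)), (phi g); simpl. intros H; injection H; intros; f_equal; lia. }
  intros g m. rewrite /zpow.
  destruct (Z.ltb_spec m 0) as [Hm|Hm].
  - rewrite Hinv Hpow /z2inv /=. f_equal; lia.
  - rewrite Hpow. f_equal; lia.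
Qed.

Lemma raag_fa (V : finType) (adj : rel V) (adj_irr : irreflexive adj)
  (G : grp) (iota : V -> G) (raag : is_RAAG adj iota) (u v : V) :
  adj u v -> free_abelian_pair (iota u) (iota v).
Proof.
  intros Huv. destruct raag as [Hcomm Huniv].
  have Hne : u != v. { apply/eqP; intros <-. by rewrite adj_irr in Huv. }
  split; [exact (Hcomm u v Huv)|].
  pose f := fun w : V => (if w == u then (1%Z, 0%Z) else if w == v then (0%Z, 1%Z) else (0%Z, 0%Z)) : Z2.
  have Hf : forall a b, adj a b -> gmul (f a) (f b) = gmul (f b) (f a).
  { intros a b _. simpl. rewrite /z2mul. f_equal; lia. }
  destruct (proj1 (Huniv Z2 f Hf)) as [phi [Hphi Hiota]].
  intros m n H.
  have := f_equal phi H. rewrite Hphi /=.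
  destruct (hom_z2 _ _ Hphi) as [H1 Hz]. rewrite H1 !Hz !Hiota /f. have Hvu : (v == u) = false by rewrite eq_sym; apply negbTE. rewrite !eqxx ?(negbTE Hne) ?Hvu /z2mul /=.
  intros E; injection E; intros; split; lia.
Qed.

Lemma gen_mono (G : grp) (S1 S2 : G -> Prop) : (forall g, S1 g -> S2 g) ->
  forall g, gen S1 g -> gen S2 g.
Proof.
  intros Hs g Hg; induction Hg.
  - apply gen_in; auto.
  - apply gen_one.
  - apply gen_mul; auto.
  - apply gen_inv; auto.
Qed.

Theorem proposition2p7 (V : finType) (adj : rel V)
  (adj_sym : symmetric adj) (adj_irr : irreflexive adj)
  (conn : forall u v : V, connect adj u v)
  (three : 3 <= #|V|)
  (G : grp) (iota : V -> G) (raag : is_RAAG adj iota)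
  (calG : {set V} -> Prop)
  (h1 : forall D, calG D -> property_F (A_sub iota D))
  (h2 : forall u v w : V, u != w -> adj u v -> adj v w ->
          exists D, calG D /\ u \in D /\ v \in D /\ w \in D) :
  property_F (A_sub iota [set: V]).
Proof.
  intros T E act Htree TA.
  set S := A_sub iota [set: V].
  have Sinv : forall g, S g -> S (ginv g) by intros g Hg; apply gen_inv.
  have Siota : forall v, S (iota v) by intros v; apply gen_in; exists v; split; [apply in_setT|].
  have SD : forall D g, A_sub iota D g -> S g.
  { intros D. apply gen_mono. intros g [v [_ ->]]. exists v; split; [apply in_setT|reflexivity]. }
  destruct (classic (exists a b x y, S a /\ S b /\ E x y /\
       (free_pair a b \/ free_abelian_pair a b) /\
       act a x = x /\ act a y = y /\ act b x = x /\ act b y = y)) as [H|NE];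
    [right; exact H|left].
  destruct TA as [T1 [T2 [T3 T4]]].
  have fixD : forall D, calG D -> exists p, forall g, A_sub iota D g -> act g p = p.
  { intros D HD.
    have TAD : tree_action (A_sub iota D) E act.
    { split; [exact T1|split; [|split]].
      - intros g h x Hg Hh. apply T2; eapply SD; eassumption.
      - intros g x y Hg. apply T3; eapply SD; eassumption.
      - intros g x y Hg. apply T4; eapply SD; eassumption. }
    destruct (h1 D HD T E act Htree TAD) as [Hp|[a [b [x [y [Ha [Hb Hr]]]]]]]; [exact Hp|].
    exfalso; apply NE. exists a, b, x, y. split; [eapply SD; eassumption|].
    split; [eapply SD; eassumption|exact Hr]. }
  have uniq : forall a b p q, adj a b -> act (iota a) p = p -> act (iota b) p = p ->
      act (iota a) q = q -> act (iota b) q = q -> p = q.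
  { intros a b p q Hab ap bp aq bq. apply NNPP; intros Hpq.
    destruct (fix_edge _ _ _ _ _ Htree (conj T1 (conj T2 (conj T3 T4))) Sinv _ _ _ _ (Siota a) (Siota b) ap aq bp bq Hpq)
      as [x1 [Hx1 [A1 B1]]].
    apply NE. exists (iota a), (iota b), p, x1.
    do 3 (split; [auto|]). split; [right; exact (raag_fa _ _ adj_irr _ _ raag _ _ Hab)|auto]. }
  have seg : forall a b c, a != c -> adj a b -> adj b c ->
      exists q, act (iota a) q = q /\ act (iota b) q = q /\ act (iota c) q = q.
  { intros a b c Hac Hab Hbc. destruct (h2 a b c Hac Hab Hbc) as [D [HD [Ha [Hb Hc]]]].
    destruct (fixD D HD) as [q Hq]. exists q.
    split; [|split]; apply Hq; apply gen_in; eauto. }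
  have [x0 [y0 [_ _ Hxy0]]] : exists x y : V, [/\ x \in [set: V], y \in [set: V] & x != y].
  { apply/card_gt1P. rewrite cardsT. by apply: leq_trans three. }
  have [v0 Hv0] : exists v, adj x0 v.
  { move: (conn x0 y0) => /connectP [s Hs Hl].
    destruct s as [|w s]; [by rewrite Hl eqxx in Hxy0|].
    exists w. by move: Hs => /= /andP [].  }
  set u0 := x0.
  have Hne0 : u0 != v0 by apply/eqP; intros <-; rewrite adj_irr in Hv0.
  have [p [pu pv]] : exists p, act (iota u0) p = p /\ act (iota v0) p = p.
  { destruct (classic (exists c, adj v0 c /\ c != u0)) as [[c [Hc1 Hc2]]|N1].
    { destruct (seg u0 v0 c) as [q [A [B _]]]; [by rewrite eq_sym|exact Hv0|exact Hc1|].
      exists q; auto. }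
    destruct (classic (exists c, adj u0 c /\ c != v0)) as [[c [Hc1 Hc2]]|N2].
    { destruct (seg c u0 v0) as [q [_ [A B]]]; [exact Hc2|by rewrite adj_sym|exact Hv0|].
      exists q; auto. }
    exfalso.
    have Hcl : closed adj (mem [set u0; v0]).
    { have one : forall x y, adj x y -> x \in [set u0; v0] -> y \in [set u0; v0].
      { intros x y Hxy. rewrite !inE => /orP [/eqP Hx|/eqP Hx]; rewrite Hx in Hxy.
        - destruct (eqVneq y v0) as [->|Hy]; [by apply/orP; right|].
          exfalso; apply N2; exists y; auto.
        - destruct (eqVneq y u0) as [->|Hy]; [by apply/orP; left|].
          exfalso; apply N1; exists y; auto. }
      intros x y Hxy. apply/idP/idP; [exact (one x y Hxy)|].
      apply one. by rewrite adj_sym. }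
    have All : [set: V] \subset [set u0; v0].
    { apply/subsetP => z _. have := closed_connect Hcl (conn u0 z).
      rewrite !inE eqxx /= => <- //. }
    have := subset_leq_card All. rewrite cardsT cards2 Hne0.
    move=> H. have := leq_trans three H. by []. }
  pose good z := act (iota z) p = p /\ forall c, adj z c -> act (iota c) p = p.
  have step : forall z z', act (iota z) p = p -> act (iota z') p = p -> adj z z' -> good z'.
  { intros z z' Hz Hz' Hzz. split; [exact Hz'|]. intros c Hc.
    destruct (eqVneq z c) as [<-|Hzc]; [exact Hz|].
    destruct (seg z z' c Hzc Hzz Hc) as [q [A [B C]]].
    by rewrite (uniq z z' p q Hzz Hz Hz' A B). }
  have good_v0 : good v0 by apply (step u0 v0 pu pv Hv0).
  have gp : forall s a, good a -> path adj a s -> good (seq.last a s).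
  { elim => [|w s IH] a Ga Hs; [exact Ga|].
    move: Hs => /= /andP [Haw Hs]. apply IH; [|exact Hs].
    apply (step a w (proj1 Ga) (proj2 Ga w Haw) Haw). }
  have allgood : forall z, good z.
  { intros z. move: (conn v0 z) => /connectP [s Hs ->]. exact (gp s v0 good_v0 Hs). }
  exists p. intros g Hg. induction Hg as [x [v [_ ->]]| |x y Hx IHx Hy IHy|x Hx IHx].
  - exact (proj1 (allgood v)).
  - apply T1.
  - rewrite T2 ?IHy ?IHx //; eapply gen_mono; try eassumption; auto.
  - have Hx' : S x by exact Hx.
    rewrite -{1}IHx -T2; [|apply Sinv; exact Hx'|exact Hx']. rewrite gmulV. apply T1.
Qed.
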